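(* For every vertex $t\in\mathbb T_n$ of the $(\mathbf r,\mathbf z)$-seed pattern described in the context, $G_tB_t=B_{t_0}C_t$.
   Context: $n\ge1$, $[b]_+=\max(b,0)$. $\mathbb T_n$ is the $n$-regular tree with edges labeled $1,\dots,n$, distinct labels at each vertex; $t\overset{k}{-}t'$ denotes an edge labeled $k$; $t_0$ is a root vertex. Fix positive integers $r_1,\dots,r_n$ and a skew-symmetrizable integer $n\times n$ matrix $B$. Assign integer $n\times n$ matrices $B_t=(b_{ij;t})$, $C_t=(c_{ij;t})$ and $G_t$ (with columns $\mathbf g_{i;t}$) to each $t\in\mathbb T_n$ by $B_{t_0}=B$, $C_{t_0}=G_{t_0}=I_n$, and for $t\overset{k}{-}t'$, with $\varepsilon\in\{\pm1\}$ (the results are independent of $\varepsilon$): $b_{ij;t'}=-b_{ij;t}$ if $i=k$ or $j=k$, else $b_{ij;t'}=b_{ij;t}+r_k([-\varepsilon b_{ik;t}]_+b_{kj;t}+b_{ik;t}[\varepsilon b_{kj;t}]_+)$; $c_{ij;t'}=-c_{ij;t}$ if $j=k$, else $c_{ij;t'}=c_{ij;t}+r_k(c_{ik;t}[\varepsilon b_{kj;t}]_++[-\varepsilon c_{ik;t}]_+b_{kj;t})$; $\mathbf g_{i;t'}=\mathbf g_{i;t}$ for $i\ne k$ and $\mathbf g_{k;t'}=-\mathbf g_{k;t}+r_k\big(\sum_{j=1}^n[-\varepsilon b_{jk;t}]_+\mathbf g_{j;t}-\sum_{j=1}^n[-\varepsilon c_{jk;t}]_+\mathbf b_j\big)$ with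 $\mathbf b_j$ the $j$-th column of $B$. ($B_t$ is the exchange matrix at $t$ of the generalized $(\mathbf r,\mathbf z)$-seed pattern with initial exchange matrix $B$, and $C_t,G_t$ are its $C$- and $G$-matrices.) *)

(* Defs.v *)
From mathcomp Require Import all_boot all_order all_algebra.
Set Implicit Arguments. Unset Strict Implicit. Unset Printing Implicit Defensive.
Import Order.TTheory GRing.Theory Num.Theory.
Local Open Scope ring_scope.

Definition posp (b : int) : int := Num.max b 0.

Definition skew_symmetrizable (n : nat) (B : 'M[int]_n) : Prop :=
  exists d : 'I_n -> nat, (forall i, (0 < d i)%N) /\
    forall i j, (d i)%:Z * B i j = - ((d j)%:Z * B j i).

Section Mut.
Variables (n : nat) (r : 'I_n -> nat) (B0 : 'M[int]_n).

Definition mutB (e : int) (k : 'I_n) (B : 'M[int]_n) : 'M[int]_n :=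
  \matrix_(i, j) if (i == k) || (j == k) then - B i j
                 else B i j + (r k)%:Z * (posp (- e * B i k) * B k j
                                          + B i k * posp (e * B k j)).

Definition mutC (e : int) (k : 'I_n) (B C : 'M[int]_n) : 'M[int]_n :=
  \matrix_(i, j) if j == k then - C i j
                 else C i j + (r k)%:Z * (C i k * posp (e * B k j)
                                          + posp (- e * C i k) * B k j).

Definition mutG (e : int) (k : 'I_n) (B C G : 'M[int]_n) : 'M[int]_n :=
  \matrix_(i, j) if j == k then
      - G i k + (r k)%:Z * (\sum_(l < n) posp (- e * B l k) * G i l
                            - \sum_(l < n) posp (- e * C l k) * B0 i l)
    else G i j.

Definition seed := ('M[int]_n * 'M[int]_n * 'M[int]_n)%type.

Definition mut_seed (ke : 'I_n * int) (s : seed) : seed :=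
  let: (B, C, G) := s in
  (mutB ke.2 ke.1 B, mutC ke.2 ke.1 B C, mutG ke.2 ke.1 B C G).

(* The vertex t of T_n reached from t0 by the path of edges labelled
   w.1 (in order), each mutation performed with the sign w.2. *)
Definition seed_at (w : seq ('I_n * int)) : seed :=
  foldl (fun s ke => mut_seed ke s) (B0, 1%:M, 1%:M) w.

Definition B_at w := (seed_at w).1.1.
Definition C_at w := (seed_at w).1.2.
Definition G_at w := (seed_at w).2.
End Mut.

(* Main.v *)
Require Import Defs.
From mathcomp Require Import all_boot all_order all_algebra.
From mathcomp Require Import ring zify.
Import Order.TTheory GRing.Theory Num.Theory.
Local Open Scope ring_scope.

Lemma posp_mull (d x : int) : 0 <= d -> posp (d * x) = d * posp x.
Proof.
move=> hd; rewrite /posp; case: (lerP 0 x) => hx.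
- by rewrite !max_l // mulr_ge0.
- by rewrite !max_r ?mulr0 // ?(ltW hx) // mulr_ge0_le0 // ltW.
Qed.

Lemma posp0 : posp 0 = 0.
Proof. by rewrite /posp max_l. Qed.

Lemma sum_pick n (f : 'I_n -> int) k : (forall l, l != k -> f l = 0) ->
  \sum_l f l = f k.
Proof.
move=> h; rewrite (bigD1 k) //= big1 ?addr0 // => l /andP[_ hl]; exact: h.
Qed.

Section Step.
Variables (n : nat) (r : 'I_n -> nat) (B0 : 'M[int]_n).
Variables (e : int) (k : 'I_n) (B C G : 'M[int]_n).
Hypothesis Bkk : B k k = 0.

Definition JE : 'M[int]_n := \matrix_(i, j)
  ((if i == j then (if j == k then -1 else 1) else 0)
   + (if j == k then (r k)%:Z * posp (- e * B i k) else 0)).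
Definition BF : 'M[int]_n := \matrix_(i, j)
  (if j == k then - B i k else B i j + B i k * ((r k)%:Z * posp (e * B k j))).
Definition JF : 'M[int]_n := \matrix_(i, j)
  ((if i == j then (if j == k then -1 else 1) else 0)
   + (if i == k then (r k)%:Z * posp (e * B k j) else 0)).
Definition Z : 'M[int]_n := \matrix_(i, j)
  (if j == k then (r k)%:Z * posp (- e * C i k) else 0).

Lemma sumL_JE (f : 'I_n -> int) i : \sum_l JE i l * f l =
  (if i == k then - f i else f i) + (r k)%:Z * posp (- e * B i k) * f k.
Proof.
under eq_bigr => l _ do rewrite mxE mulrDl.
rewrite big_split /=; congr (_ + _).
  rewrite (sum_pick _ _ i); first by rewrite eqxx; case: (i == k); ring.
  by move=> l; rewrite eq_sym => /negbTE ->; rewrite mul0r.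
rewrite (sum_pick _ _ k) ?eqxx // => l /negbTE ->; exact: mul0r.
Qed.

Lemma sumR_JE (f : 'I_n -> int) j : \sum_l f l * JE l j =
  (if j == k then - f j else f j)
  + (if j == k then \sum_l f l * ((r k)%:Z * posp (- e * B l k)) else 0).
Proof.
under eq_bigr => l _ do rewrite mxE mulrDr.
rewrite big_split /=; congr (_ + _).
  rewrite (sum_pick _ _ j); first by rewrite eqxx; case: (j == k); ring.
  by move=> l /negbTE ->; rewrite mulr0.
case: (j == k) => //; apply: big1 => l _; exact: mulr0.
Qed.

Lemma sumR_JF (f : 'I_n -> int) j : \sum_l f l * JF l j =
  (if j == k then - f j else f j) + f k * ((r k)%:Z * posp (e * B k j)).
Proof.
under eq_bigr => l _ do rewrite mxE mulrDr.
rewrite big_split /=; congr (_ + _).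
  rewrite (sum_pick _ _ j); first by rewrite eqxx; case: (j == k); ring.
  by move=> l /negbTE ->; rewrite mulr0.
rewrite (sum_pick _ _ k) ?eqxx // => l /negbTE ->; exact: mulr0.
Qed.

Lemma sumL_Z (f : 'I_n -> int) i : \sum_l Z i l * f l =
  (r k)%:Z * posp (- e * C i k) * f k.
Proof.
under eq_bigr => l _ do rewrite mxE.
rewrite (sum_pick _ _ k) ?eqxx // => l /negbTE ->; exact: mul0r.
Qed.

Lemma sumR_Z (f : 'I_n -> int) j : \sum_l f l * Z l j =
  if j == k then \sum_l f l * ((r k)%:Z * posp (- e * C l k)) else 0.
Proof.
under eq_bigr => l _ do rewrite mxE.
case: (j == k) => //; apply: big1 => l _; exact: mulr0.
Qed.

Lemma BFkj j : BF k j = if j == k then 0 else B k j.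
Proof. by rewrite mxE Bkk mul0r addr0 oppr0. Qed.

Lemma eqG : mutG r B0 e k B C G = G *m JE - B0 *m Z.
Proof.
apply/matrixP => i j; rewrite !mxE sumR_JE sumR_Z ?mxE.
case: eqP => [->|_]; last by rewrite addr0 subr0.
rewrite mulrDr ?mulrBr ?mulrN !mulr_sumr addrA.
congr (_ + _ - _); apply: eq_bigr => l _; ring.
Qed.

Lemma eqBF : BF = B *m JF.
Proof.
apply/matrixP => i j; rewrite mxE [in RHS]mxE sumR_JF.
case: eqP => [->|_]; last by [].
by rewrite Bkk mulr0 posp0 !mulr0 addr0.
Qed.

Lemma eqB : mutB r e k B = JE *m BF.
Proof.
apply/matrixP => i j; rewrite mxE [in RHS]mxE sumL_JE BFkj mxE.
case: (eqVneq i k) => [->|hi].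
  rewrite Bkk mulr0 posp0 mulr0 mul0r addr0 /=.
  by case: (eqVneq j k) => [->|hj]; rewrite ?Bkk ?oppr0 ?mul0r ?addr0.
case: (eqVneq j k) => [->|hj] /=; first by rewrite mulr0 addr0.
ring.
Qed.

Lemma eqC : mutC r e k B C = C *m JF + Z *m B.
Proof.
apply/matrixP => i j; rewrite !mxE sumR_JF sumL_Z.
case: (eqVneq j k) => [->|hj]; first by rewrite Bkk ?mulr0 ?posp0 ?mulr0 ?addr0 ?eqxx.
rewrite /=; ring.
Qed.

Lemma JEE : JE *m JE = 1%:M.
Proof.
apply/matrixP => i j; rewrite mxE sumR_JE ?mxE sumL_JE.
rewrite ?mulr0 ?addr0.
case: (eqVneq j k) => [->|hj].
  rewrite ?eqxx.
  case: (eqVneq i k) => [->|hi]; first by rewrite ?eqxx Bkk mulr0 posp0 mulr0 /=; ring.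
  rewrite /= Bkk mulr0 posp0 mulr0; ring.
by case: (i == j).
Qed.

Lemma ZJE : Z *m JE = - Z.
Proof.
apply/matrixP => i j; rewrite !mxE sumR_JE sumL_Z ?mxE.
rewrite Bkk mulr0 posp0 !mulr0.
by case: (j == k); rewrite ?addr0 ?oppr0.
Qed.

Lemma ZBF : Z *m BF = Z *m B.
Proof.
apply/matrixP => i j; rewrite !mxE !sumL_Z BFkj.
by case: eqP => [->|]; rewrite ?Bkk.
Qed.

Lemma step : G *m B = B0 *m C ->
  mutG r B0 e k B C G *m mutB r e k B = B0 *m mutC r e k B C.
Proof.
move=> hGB.
rewrite eqG eqB eqC mulmxBl -!mulmxA (mulmxA JE) JEE mul1mx.
rewrite (mulmxA Z) ZJE mulNmx ZBF eqBF mulmxA hGB.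
by rewrite mulmxN opprK -mulmxA mulmxDr.
Qed.
End Step.

Definition skewd {n} (d : 'I_n -> nat) (B : 'M[int]_n) :=
  forall i j, (d i)%:Z * B i j = - ((d j)%:Z * B j i).

Lemma skew_diag {n} d (B : 'M[int]_n) : (forall i, (0 < d i)%N) -> skewd d B ->
  forall i, B i i = 0.
Proof.
move=> hd hs i; have h := hs i i.
have h2 : (d i)%:Z * B i i = 0 by lia.
move: h2 => /eqP; rewrite mulf_eq0 => /orP[/eqP h0|/eqP //].
move: (hd i); lia.
Qed.

Lemma skew_mut {n} (r : 'I_n -> nat) d (B : 'M[int]_n) e k :
  skewd d B -> skewd d (mutB r e k B).
Proof.
move=> hs i j; rewrite !mxE.
have hp : forall a b, posp (- e * B a b) * (d a)%:Z = posp (e * B b a) * (d b)%:Z.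
  move=> a b; rewrite mulrC -posp_mull // mulrCA hs mulrN -mulNr opprK.
  rewrite mulrCA (posp_mull (d b)%:Z) //; exact: mulrC.
case: (eqVneq i k) => [->|hi] /=.
  by rewrite orbC; case: (j == k) => /=; rewrite !mulrN hs.
case: (eqVneq j k) => [->|hj] /=.
  by rewrite !mulrN hs.
rewrite ?orbF /=.
have e1 := hp i k; have e2 := hp j k; have s1 := hs i k; have s2 := hs j k.
have s3 := hs i j.
set pik := posp (- e * B i k) in e1 *; set pjk := posp (- e * B j k) in e2 *.
set qki := posp (e * B k i) in e1 *; set qkj := posp (e * B k j) in e2 *.
transitivity ((d i)%:Z * B i j + (r k)%:Z * ((pik * (d i)%:Z) * B k j + ((d i)%:Z * B i k) * qkj)).
  ring.
rewrite e1 s1 s3.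
transitivity (- ((d j)%:Z * B j i + (r k)%:Z * ((pjk * (d j)%:Z) * B k i + ((d j)%:Z * B j k) * qki))); last by ring.
rewrite e2 s2; ring.
Qed.

Theorem propositionP5 (n : nat) (r : 'I_n -> nat) (B : 'M[int]_n)
  (w : seq ('I_n * int)) :
  (forall k, (0 < r k)%N) ->
  skew_symmetrizable B ->
  sorted (fun a b : 'I_n * int => a.1 != b.1) w ->
  all (fun ke : 'I_n * int => (ke.2 == 1) || (ke.2 == -1)) w ->
  G_at r B w *m B_at r B w = B *m C_at r B w.
Proof.
move=> _ [d [hd hs]] _ _.
rewrite /G_at /B_at /C_at /seed_at.
suff: forall s : seed n, skewd d s.1.1 -> s.2 *m s.1.1 = B *m s.1.2 ->
  let s' := foldl (fun s ke => mut_seed r B ke s) s w in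
  skewd d s'.1.1 /\ s'.2 *m s'.1.1 = B *m s'.1.2.
  by move=> /(_ (B, 1%:M, 1%:M) hs) /=; rewrite mul1mx mulmx1 => /(_ erefl) [].
elim: w => [|[k e] w IH] [[B1 C1] G1] /= h1 h2; first by split.
apply: IH => /=; first exact: skew_mut.
apply: step => //; exact: skew_diag h1 k.
Qed.
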